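(* Let $\underline x\le0$, $\alpha_0\in(0,1)$, $\delta>0$, $\Gamma_1\in\mathbb R$, $\Lambda_1>0$. Let $\xi$ be a real random variable with law $\mu\in\mathcal P_2(\mathbb R)$ satisfying $E|\xi-\underline x|^{-2}<\delta^{-2}$, let $\eta\sim N(0,1)$ be independent of $\xi$, and set $X=\underline x+(\xi-\underline x)e^{\Gamma_1+\sqrt{\Lambda_1}\eta}$ with distribution function $F_X$. Then there is exactly one $z\in\mathbb R$ with $F_X(z)=\alpha_0$.
   Context: $\mathcal P_2(\mathbb R)$ denotes the probability measures on $\mathbb R$ with finite second moment. In the paper $X=X^{t,\xi}_T$ is the terminal wealth under a deterministic proportional strategy, with $\Gamma_1=\Gamma_1(t)$, $\Lambda_1=\Lambda_1(t)$, and the condition on $\mu$ defines the set $\mathcal P^\delta_{\mathrm{MES}}$. *)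

(* Defs.v *)
From HB Require Import structures.
From mathcomp Require Import all_boot all_order all_algebra.
From mathcomp Require Import all_classical all_reals all_analysis.
Set Implicit Arguments. Unset Strict Implicit. Unset Printing Implicit Defensive.
Import Order.TTheory GRing.Theory Num.Theory.
Local Open Scope classical_set_scope.
Local Open Scope ring_scope.

Definition indep_RV d (T : measurableType d) (R : realType) (P : probability T R)
  (X Y : {RV P >-> R}) : Prop :=
  forall A B : set R, measurable A -> measurable B ->
    P (X @^-1` A `&` Y @^-1` B) = (P (X @^-1` A) * P (Y @^-1` B))%E.

Definition inv_sq_ext (R : realType) (y : R) : \bar R :=
  if y == 0 then +oo%E else ((`|y| ^+ 2)^-1)%:E.

Definition distr_fun d (T : measurableType d) (R : realType) (P : probability T R)
  (X : T -> R) (z : R) : \bar R := P [set w | X w <= z].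

(* Main.v *)
Require Import Defs.
From HB Require Import structures.
From mathcomp Require Import all_boot all_order all_algebra.
From mathcomp Require Import all_classical all_reals all_analysis.
From mathcomp Require Import lra measurable_realfun.
Import Order.TTheory GRing.Theory Num.Theory.
Local Open Scope classical_set_scope.
Local Open Scope ring_scope.

Section normal_facts.
Context (R : realType).
Local Open Scope ereal_scope.

Lemma normal_itv_le (a b : R) : (a <= b)%R ->
  normal_prob 0 1 `[a, b[%classic <= (normal_peak (1:R) * (b - a))%:E.
Proof.
move=> ab; rewrite /normal_prob.
apply: (@le_trans _ _ (\int[lebesgue_measure]_(x in `[a, b[%classic) (cst (normal_peak (1:R))%:E) x)).
  apply: ge0_le_integral => //.
  - by move=> x _; rewrite lee_fin normal_pdf_ge0.
  - apply: (measurable_funS measurableT) => //; apply/measurable_EFinP; exact: measurable_normal_pdf.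
  - by move=> x _; rewrite lee_fin normal_pdf_ub ?oner_neq0.
rewrite integral_cst//. have := lebesgue_measure_itv `[a, b[; rewrite /= => ->.
case: ifPn => ab'; first by rewrite -EFinD -EFinM.
by rewrite mule0 lee_fin mulr_ge0 ?normal_peak_ge0 ?subr_ge0.
Qed.

Lemma normal_itv_gt0 (a b : R) : (a < b)%R ->
  0 < normal_prob 0 1 `]a, b[%classic.
Proof.
move=> ab; rewrite /normal_prob.
pose c := (normal_peak (1:R) * expR (- (a ^+ 2 + b ^+ 2)))%R.
have c0 : (0 < c)%R by rewrite mulr_gt0 ?expR_gt0 ?normal_peak_gt0 ?oner_neq0.
apply: (@lt_le_trans _ _ (\int[lebesgue_measure]_(x in `]a, b[%classic) (cst c%:E) x)).
  rewrite integral_cst//; have := lebesgue_measure_itv `]a, b[; rewrite /= => ->.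
  rewrite lte_fin ab -EFinD -EFinM lte_fin.
  by rewrite mulr_gt0// subr_gt0.
apply: ge0_le_integral => //.
- by move=> x _; rewrite lee_fin ltW.
- apply: measurable_funTS. apply/measurable_EFinP. exact: measurable_normal_pdf.
move=> x /=; rewrite in_itv/= => /andP[ax xb].
rewrite lee_fin /normal_pdf oner_eq0 /c ler_pM2l ?normal_peak_gt0 ?oner_neq0//.
rewrite /normal_fun ler_expR subr0 expr1n.
have h : (x ^+ 2 <= a ^+ 2 + b ^+ 2)%R by have [x0|x0] := (@leP _ R 0%R x); nra.
have hx : (0 <= x ^+ 2)%R := sqr_ge0 _.
lra.
Qed.
End normal_facts.


Lemma cover_itv (R : realType) (lo h v : R) (K : nat) : 0 < h -> lo <= v ->
  v < lo + K%:R * h ->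
  exists2 j, (j < K)%N & lo + j%:R * h <= v < lo + j.+1%:R * h.
Proof.
move=> h0 lov vK; have q0 : 0 <= (v - lo) / h.
  by rewrite divr_ge0 ?subr_ge0// ltW.
exists (Num.truncn ((v - lo) / h)).
  rewrite truncn_lt_nat// ltr_pdivrMr//; lra.
have /andP[a b] := truncn_itv q0.
rewrite ler_pdivlMr// in a; rewrite ltr_pdivrMr// in b.
by apply/andP; split; lra.
Qed.

Lemma itv_uniq (R : realType) (lo h v : R) (i j : nat) : 0 < h ->
  lo + i%:R * h <= v < lo + i.+1%:R * h ->
  lo + j%:R * h <= v < lo + j.+1%:R * h -> i = j.
Proof.
move=> h0 /andP[a b] /andP[c e].
have ij : (i%:R * h < j.+1%:R * h) by lra.
have ji : (j%:R * h < i.+1%:R * h) by lra.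
rewrite ltr_pM2r// ltr_nat ltnS in ij.
rewrite ltr_pM2r// ltr_nat ltnS in ji.
by apply/eqP; rewrite eqn_leq ij ji.
Qed.


Definition Xf {R : realType} {T : Type} (xi eta : T -> R) (xlow G s : R) (w : T) :=
  xlow + (xi w - xlow) * expR (G + s * eta w).

Lemma small_inv (R : realType) (e : R) : 0 < e -> exists n : nat, (n.+1%:R)^-1 < e.
Proof.
move=> e0; exists (Num.truncn e^-1).
by rewrite invf_plt ?posrE ?ltr0n// truncnS_gt.
Qed.

Lemma aux_self (R : realType) (z i : R) : 0 < i -> z + i <= z -> False.
Proof. by move=> *; lra. Qed.
Lemma aux_lt (R : realType) (x z i : R) : 0 < i -> x <= z - i -> x < z.
Proof. by move=> *; lra. Qed.
Lemma aux_le (R : realType) (x z i : R) : i < z - x -> x <= z - i.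
Proof. by move=> *; lra. Qed.

Section main.
Context d (T : measurableType d) (R : realType) (P : probability T R)
  (xi eta : {RV P >-> R}).
Context (Heta : forall A : set R, measurable A ->
   distribution P eta A = normal_prob 0 1 A).
Context (Hind : indep_RV xi eta).

Let mxi : measurable_fun setT xi := @measurable_funPT _ _ _ _ xi.
Let meta : measurable_fun setT eta := @measurable_funPT _ _ _ _ eta.

Lemma mset_eq (f g : T -> R) : measurable_fun setT f -> measurable_fun setT g ->
  measurable [set w | f w = g w].
Proof.
move=> mf mg; have := measurable_funB mf mg measurableT (measurable_set1 0).
rewrite setTI; congr measurable; apply/seteqP; split => w /=.
  by move/eqP; rewrite subr_eq0 => /eqP.
by move=> ->; rewrite subrr.
Qed.

Lemma mset_le (f g : T -> R) : measurable_fun setT f -> measurable_fun setT g ->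
  measurable [set w | f w <= g w].
Proof.
move=> mf mg; have := measurable_funB mg mf measurableT (measurable_itv `[0, +oo[).
rewrite setTI; congr measurable; apply/seteqP; split => w /=;
  by rewrite in_itv/= andbT subr_ge0.
Qed.

Lemma mset_lt (f g : T -> R) : measurable_fun setT f -> measurable_fun setT g ->
  measurable [set w | f w < g w].
Proof.
move=> mf mg; have := measurable_funB mg mf measurableT (measurable_itv `]0, +oo[).
rewrite setTI; congr measurable; apply/seteqP; split => w /=;
  by rewrite in_itv/= andbT subr_gt0.
Qed.

Lemma mset_pre (f : T -> R) (A : set R) : measurable_fun setT f -> measurable A ->
  measurable [set w | A (f w)].
Proof. by move=> mf mA; have := mf measurableT _ mA; rewrite setTI. Qed.

Arguments mset_eq {f g}.
Arguments mset_le {f g}.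
Arguments mset_lt {f g}.
Arguments mset_pre {f A}.

Lemma rect (k : R -> R) (A B : set R) : measurable_fun setT k ->
  measurable A -> measurable B ->
  P ([set w | A (k (xi w))] `&` [set w | B (eta w)]) =
  (P [set w | A (k (xi w))] * P [set w | B (eta w)])%E.
Proof.
move=> mk mA mB; have mkA : measurable (k @^-1` A).
  by have := mk measurableT _ mA; rewrite setTI.
exact: (Hind _ _ mkA mB).
Qed.

Lemma eta_law (B : set R) : measurable B -> P [set w | B (eta w)] = normal_prob 0 1 B.
Proof. by move=> mB; rewrite -Heta. Qed.

Lemma eta_itv_le (a b : R) : a <= b ->
  (P [set w | `[a, b[%classic (eta w)] <= (normal_peak (1:R) * (b - a))%:E)%E.
Proof. by move=> ab; rewrite eta_law ?normal_itv_le//; exact: measurable_itv. Qed.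

Lemma eta_itv_gt0 (a b : R) : a < b -> (0 < P [set w | `]a, b[%classic (eta w)])%E.
Proof. by move=> ab; rewrite eta_law ?normal_itv_gt0//; exact: measurable_itv. Qed.

Lemma itv_le_step (lo h : R) (j : nat) : 0 < h ->
  lo + j%:R * h <= lo + j.+1%:R * h.
Proof. by move=> h0; rewrite lerD2l ler_pM2r// ler_nat. Qed.

Lemma atomless (k : R -> R) : measurable_fun setT k ->
  P [set w | eta w = k (xi w)] = 0%E.
Proof.
move=> mk.
set E := [set w | eta w = k (xi w)].
have mkx : measurable_fun setT (k \o xi) := measurableT_comp mk mxi.
have mE : measurable E by have := mset_eq meta mkx; exact.
pose Ft (n : nat) := [set w | n.+1%:R <= `|eta w|].
have mFt n : measurable (Ft n).
  by have := mset_le (measurable_cst (n.+1%:R : R)) (measurableT_comp (@normr_measurable R setT) meta); exact.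
have step n : (P E <= P (Ft n))%E.
  apply/lee_addgt0Pr => e e0.
  set N : R := n.+1%:R.
  have N0 : 0 < N by rewrite ltr0n.
  pose pk := normal_peak (1:R).
  have pk0 : 0 <= pk := normal_peak_ge0 _.
  pose K := (Num.truncn (pk * (N *+ 2) / e)).+1.
  pose h := (N *+ 2) / K%:R.
  have K0 : 0 < K%:R :> R by rewrite ltr0n.
  have h0 : 0 < h by rewrite divr_gt0// mulrn_wgt0.
  have Kh : K%:R * h = N *+ 2 by rewrite /h mulrC divfK// gt_eqF.
  have pkh : pk * h < e.
    rewrite /h mulrA ltr_pdivrMr// [X in _ < X]mulrC -ltr_pdivrMr//.
    exact: truncnS_gt.
  pose I (j : nat) := `[-N + j%:R * h, -N + j.+1%:R * h[%classic.
  pose G (j : nat) := if j is j'.+1 then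
      [set w | I j' (k (xi w))] `&` [set w | I j' (eta w)] else Ft n.
  have mG j : measurable (G j).
    case: j => [|j] //=; apply: measurableI.
      exact: (mset_pre mkx (measurable_itv _)).
    exact: (mset_pre meta (measurable_itv _)).
  have cov : E `<=` \big[setU/set0]_(j < K.+1) G j.
    rewrite -bigcup_mkord => w Ew.
    have [hi|lo] := leP N `|eta w|.
      by exists 0%N.
    move: lo; rewrite ltr_norml => /andP[lo1 lo2].
    have [||j jK Ij] := @cover_itv _ (-N) h (eta w) K h0.
    - exact: ltW.
    - by rewrite Kh; lra.
    exists j.+1; first by rewrite /= ltnS.
    by split; rewrite /I /= in_itv /= -?Ew.
  have := @content_subadditive _ _ _ P E G K.+1 (fun j _ => mG j) mE cov.
  rewrite big_ord_recl /= => HE; apply: (le_trans HE); apply: leeD2l.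
  pose FU (j : nat) := [set w | I j (k (xi w))].
  have mFU j : measurable (FU j) by exact: (mset_pre mkx (measurable_itv _)).
  apply: (@le_trans _ _ ((\sum_(j < K) P (FU j)) * (pk * h)%:E)%E).
    rewrite ge0_sume_distrl; last by move=> j _; exact: measure_ge0.
    apply: lee_sum => j _.
    rewrite add0n (rect _ _ _ mk (measurable_itv _) (measurable_itv _)).
    apply: lee_wpmul2l; first exact: measure_ge0.
    apply: (le_trans (eta_itv_le _ _ (itv_le_step (-N) h j h0))).
    rewrite lee_fin ler_wpM2l//; lra.
  have triv : trivIset setT FU.
    apply/trivIsetP => i j _ _ ij; apply/seteqP; split => // w [Hi Hj].
    move: Hi Hj; rewrite /FU /I /= !in_itv /= => Hi Hj.
    by move: ij; rewrite (itv_uniq _ _ _ _ _ _ h0 Hi Hj) eqxx.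
  rewrite -(@measure_bigsetU _ _ _ P FU mFU triv K).
  apply: (@le_trans _ _ (1 * (pk * h)%:E)%E).
    apply: lee_wpmul2r; first by rewrite lee_fin mulr_ge0// ltW.
    by apply: probability_le1; apply: bigsetU_measurable.
  by rewrite mul1e lee_fin ltW.
have niF : nonincreasing_seq Ft.
  move=> m p mp; apply/subsetPset => w /=; apply: le_trans.
  by rewrite ler_nat ltnS.
have F0 : (P (Ft 0%N) < +oo)%E.
  by rewrite (le_lt_trans (probability_le1 _ (mFt 0%N)))// ltry.
have cvF := nonincreasing_cvg_mu F0 mFt (bigcapT_measurable mFt) niF.
have capE : \bigcap_n Ft n = set0.
  apply/seteqP; split => // w /= H.
  have := H (Num.truncn `|eta w|) I; rewrite /Ft /=.
  by rewrite leNgt truncnS_gt.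
rewrite capE measure0 in cvF.
apply/eqP; rewrite eq_le measure_ge0 andbT.
have := lime_ge (cvgP _ cvF) (nearW _ step).
rewrite (cvg_lim _ cvF)// => H; apply: H; typeclasses eauto.
Qed.

Lemma pos_prod (k : R -> R) (a b Gm s : R) : measurable_fun setT k ->
  0 < s -> 0 <= a -> a < b ->
  (0 < P [set w | (0 < k (xi w))%R])%E ->
  (0 < P ([set w | (a < k (xi w) * expR (Gm + s * eta w))%R] `&`
          [set w | (k (xi w) * expR (Gm + s * eta w) < b)%R]))%E.
Proof.
move=> mk s0 a0 ab HY.
have mkx : measurable_fun setT (k \o xi) := measurableT_comp mk mxi.
have mlk : measurable_fun setT ((@ln R) \o (k \o xi)) := measurableT_comp (@measurable_ln R) mkx.
pose a2 := Num.max a (b / 2).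
have b0 : 0 < b by lra.
have a20 : 0 < a2 by rewrite lt_max; apply/orP; right; lra.
have aa2 : a <= a2 by rewrite le_max lexx.
have a2b : a2 < b by rewrite gt_max ab /=; lra.
pose al := ln a2; pose be := ln b; pose dl := (be - al) / 3.
have albe : al < be by rewrite /al /be ltr_ln ?posrE.
have dl0 : 0 < dl by rewrite /dl divr_gt0// subr_gt0.
have mpos : measurable [set w | 0 < k (xi w)].
  by have := mset_lt (measurable_cst (0:R)) mkx; exact.
pose S (n : nat) := [set w | 0 < k (xi w)] `&` [set w | `|ln (k (xi w))| < n%:R].
have mS n : measurable (S n).
  apply: measurableI => //.
  by have := mset_lt (measurableT_comp (@normr_measurable R setT) mlk) (measurable_cst (n%:R : R)); exact.
have [n Sn] : exists n, (0 < P (S n))%E.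
  apply: contrapT => /forallNP H.
  have H' n : (P (S n) <= 0)%E by rewrite leNgt; apply/negP; exact: H.
  have ndS : nondecreasing_seq S.
    move=> m p mp; apply/subsetPset => w [w1 w2]; split => //=.
    by apply: (lt_le_trans w2); rewrite ler_nat.
  have cupS : \bigcup_n S n = [set w | 0 < k (xi w)].
    apply/seteqP; split => [w [m _ []]//|w /= w0].
    exists (Num.truncn `|ln (k (xi w))|).+1 => //; split => //=.
    exact: truncnS_gt.
  have cvS := @nondecreasing_cvg_mu _ _ _ P S mS (bigcupT_measurable S mS) ndS.
  rewrite cupS in cvS.
  have := lime_le (cvgP _ cvS) (nearW _ H').
  rewrite (cvg_lim _ cvS)// => H2.
  have : (P [set w | (0 < k (xi w))%R] <= 0)%E by apply: H2; typeclasses eauto.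
  by rewrite leNgt HY.
pose N : R := n%:R.
pose K := (Num.truncn (N *+ 2 / dl)).+1.
have KdL : N *+ 2 < K%:R * dl by rewrite -ltr_pdivrMr//; exact: truncnS_gt.
pose A (j : nat) : set R := `]0, +oo[%classic `&`
  ((@ln R) @^-1` `[-N + j%:R * dl, -N + j.+1%:R * dl[%classic).
have mA j : measurable (A j).
  apply: measurableI; first exact: measurable_itv.
  by have := @measurable_ln R measurableT _ (measurable_itv `[-N + j%:R * dl, -N + j.+1%:R * dl[); rewrite setTI.
pose FA j := [set w | A j (k (xi w))].
have mFA j : measurable (FA j) by have := mset_pre mkx (mA j); exact.
have [j Fj] : exists j, (0 < P (FA j))%E.
  apply: contrapT => /forallNP H.
  have H' j : (P (FA j) <= 0)%E by rewrite leNgt; apply/negP; exact: H.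
  have cov : S n `<=` \big[setU/set0]_(j < K) FA j.
    rewrite -bigcup_mkord => w [/= w0 wn].
    move: wn; rewrite ltr_norml => /andP[l1 l2].
    have [||j jK Ij] := @cover_itv _ (-N) dl (ln (k (xi w))) K dl0.
    - exact: ltW.
    - lra.
    exists j => //; split; rewrite /= in_itv /= ?andbT //.
  have HS := @content_subadditive _ _ _ P (S n) FA K (fun j _ => mFA j) (mS n) cov.
  have : (P (S n) <= 0)%E.
    apply: (le_trans HS); rewrite big1// => j' _.
    by apply/eqP; rewrite eq_le H' measure_ge0.
  by rewrite leNgt Sn.
set c := -N + j%:R * dl.
have cS : -N + j.+1%:R * dl = c + dl.
  by rewrite /c -[j.+1]addn1 natrD mulrDl mul1r addrA.
pose t1 := (al - Gm - c) / s; pose t2 := (al - Gm - c + dl) / s.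
have t12 : t1 < t2 by rewrite ltr_pM2r ?invr_gt0//; lra.
have Hrect : (0 < P (FA j `&` [set w | `]t1, t2[%classic (eta w)]))%E.
  rewrite /FA (rect _ _ _ mk (mA j) (measurable_itv _)).
  by apply: mule_gt0 => //; exact: eta_itv_gt0.
have mZ : measurable_fun setT (fun w => k (xi w) * expR (Gm + s * eta w)).
  by have := measurable_funM mkx (measurableT_comp (@measurable_expR R)
    (measurable_funD (measurable_cst Gm) (measurable_funM (measurable_cst s) meta))); exact.
apply: (lt_le_trans Hrect); apply: le_measure; rewrite ?inE.
- apply: measurableI => //; exact: (mset_pre meta (measurable_itv _)).
- apply: measurableI.
    by have := mset_lt (measurable_cst a) mZ; exact.
  by have := mset_lt mZ (measurable_cst b); exact.
move=> w [[/= y0 yl] et].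
move: y0 yl et; rewrite !in_itv /= andbT cS => y0 /andP[l1 l2] /andP[e1 e2].
rewrite ltr_pdivrMr// mulrC in e1.
rewrite ltr_pdivlMr// mulrC in e2.
set u := ln (k (xi w)) + (Gm + s * eta w).
have ZE : k (xi w) * expR (Gm + s * eta w) = expR u by rewrite /u [RHS]expRD lnK ?posrE.
have dl3 : dl * 3 = be - al by rewrite /dl divfK// pnatr_eq0.
have u1 : al < u by rewrite /u; lra.
have u2 : u < be by rewrite /u; lra.
have ea2 : expR al = a2 by rewrite /al lnK ?posrE.
have eb : expR be = b by rewrite /be lnK ?posrE.
split; rewrite /= ZE.
  by apply: (le_lt_trans aa2); rewrite -ea2 ltr_expR.
by rewrite -eb ltr_expR.
Qed.

Lemma xi_atom (xlow C : R) :
  (\int[P]_w inv_sq_ext (xi w - xlow) < C%:E)%E -> P [set w | xi w = xlow] = 0%E.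
Proof.
move=> HI.
set f := fun w => inv_sq_ext (xi w - xlow).
have f0 w : (0 <= f w)%E.
  rewrite /f /inv_sq_ext; case: ifP => _; first exact: leey.
  by rewrite lee_fin invr_ge0 sqr_ge0.
have mY : measurable_fun setT (fun w => xi w - xlow).
  by have := measurable_funB mxi (measurable_cst xlow); exact.
have fE : f = fun w => if (xi w - xlow == 0) then +oo%E
    else (expR (- (2%:R * ln `|xi w - xlow|)))%:E.
  apply/funext => w; rewrite /f /inv_sq_ext; case: ifP => // /negbT y0.
  by rewrite expRN expRM_natl lnK ?posrE ?normr_gt0.
have mf : measurable_fun setT f.
  rewrite fE; apply: measurable_fun_ifT.
  - by have := measurable_fun_eqr mY (measurable_cst (0:R)); exact.
  - exact: measurable_cst.
  apply/measurable_EFinP.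
  apply: measurableT_comp; first exact: measurable_expR.
  apply: measurableT_comp; first exact: measurable_funN.
  apply: measurable_funM; first exact: measurable_cst.
  apply: measurableT_comp; first exact: measurable_ln.
  exact: measurableT_comp (@normr_measurable R setT) mY.
have mA : measurable [set w | xi w = xlow] by have := mset_eq mxi (measurable_cst xlow); exact.
apply/eqP; rewrite eq_le measure_ge0 andbT leNgt; apply/negP => PA.
have : (\int[P]_(w in [set w | xi w = xlow]) f w <= \int[P]_w f w)%E.
  by apply: ge0_subset_integral => //.
rewrite (eq_integral (cst +oo%E)); last first.
  move=> w; rewrite inE /= => H.
  by rewrite /f /inv_sq_ext H subrr eqxx.
rewrite integral_cst// gt0_mulye// leye_eq => /eqP Hinf.
by move: HI; rewrite -/f Hinf.
Qed.

Lemma mEf (G s : R) : measurable_fun setT (fun w => expR (G + s * eta w)).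
Proof.
by have := measurableT_comp (@measurable_expR R)
    (measurable_funD (measurable_cst G) (measurable_funM (measurable_cst s) meta)); exact.
Qed.

Lemma mXf (xlow G s : R) : measurable_fun setT (Xf xi eta xlow G s).
Proof.
have := measurable_funD (measurable_cst xlow)
  (measurable_funM (measurable_funB mxi (measurable_cst xlow)) (mEf G s)).
exact.
Qed.

Lemma strict (xlow G s z1 z2 : R) : 0 < s -> z1 < z2 ->
  (0 < P [set w | (Xf xi eta xlow G s w <= z1)%R])%E ->
  (P [set w | (Xf xi eta xlow G s w <= z2)%R] < 1)%E ->
  (P [set w | (Xf xi eta xlow G s w <= z1)%R] <
   P [set w | (Xf xi eta xlow G s w <= z2)%R])%E.
Proof.
move=> s0 z12 F1 F2.
set X := Xf xi eta xlow G s.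
have mX : measurable_fun setT X := mXf xlow G s.
have Epos w : 0 < expR (G + s * eta w) := expR_gt0 _.
have m1 : measurable [set w | X w <= z1] by have := mset_le mX (measurable_cst z1); exact.
have m2 : measurable [set w | X w <= z2] by have := mset_le mX (measurable_cst z2); exact.
have mlt1 : measurable [set w | z1 < X w] by have := mset_lt (measurable_cst z1) mX; exact.
have m12 : measurable ([set w | z1 < X w] `&` [set w | X w <= z2]) by exact: measurableI.
have F2E : P [set w | X w <= z2] =
    (P [set w | (X w <= z1)%R] + P ([set w | (z1 < X w)%R] `&` [set w | (X w <= z2)%R]))%E.
  rewrite -measureU//; last first.
    by apply/seteqP; split => // w [/= a [b _]]; move: a b; rewrite leNgt => /negP.
  congr (P _); apply/seteqP; split => w /=.
    by case: (leP (X w) z1) => H1 H2; [left|right].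
  by case=> [H|[_ H]] //; apply: le_trans H (ltW z12).
have fin1 : P [set w | X w <= z1] \is a fin_num.
  by rewrite ge0_fin_numE// (le_lt_trans (probability_le1 _ m1))// ltry.
suff Hp : (0 < P ([set w | (z1 < X w)%R] `&` [set w | (X w <= z2)%R]))%E.
  by rewrite F2E lteDl.
have mY : measurable_fun setT (fun x : R => x - xlow).
  by have := measurable_funB (@measurable_id _ R setT) (measurable_cst xlow); exact.
have mY' : measurable_fun setT (fun x : R => xlow - x).
  by have := measurable_funB (measurable_cst xlow) (@measurable_id _ R setT); exact.
have Xe w : X w = xlow + (xi w - xlow) * expR (G + s * eta w) by [].
have [u2p|u2n] := ltP xlow z2.
  have [HY|HY] := ltP 0%E (P [set w | (0 < (fun x => x - xlow) (xi w))%R]).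
    have := pos_prod _ (Num.max (z1 - xlow) 0) (z2 - xlow) G s mY s0 _ _ HY.
    rewrite le_max lexx orbT => /(_ isT).
    rewrite gt_max subr_gt0 u2p andbT ltrBlDr subrK z12 => /(_ isT) H.
    apply: (lt_le_trans H); apply: le_measure; rewrite ?inE//.
      apply: measurableI.
        by have := mset_lt (measurable_cst (Num.max (z1 - xlow) 0)) (measurable_funM (measurableT_comp mY mxi) (mEf G s)); exact.
      by have := mset_lt (measurable_funM (measurableT_comp mY mxi) (mEf G s)) (measurable_cst (z2 - xlow)); exact.
    move=> w [/= h1 h2]; split; rewrite /= Xe.
      by rewrite -ltrBlDl; apply: le_lt_trans h1; rewrite le_max lexx.
    by rewrite -lerBrDl ltW.
  exfalso.
  have mY0 : measurable [set w | (0 < (fun x => x - xlow) (xi w))%R].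
    by have := mset_lt (measurable_cst (0:R)) (measurableT_comp mY mxi); exact.
  pose B := [set w | z2 < X w].
  have mgt2 : measurable B by have := mset_lt (measurable_cst z2) mX; exact.
  have sub : B `<=` [set w | (0 < (fun x => x - xlow) (xi w))%R].
    move=> w; rewrite /B /= Xe -ltrBlDl => H.
    have : 0 < (xi w - xlow) * expR (G + s * eta w) by apply: lt_trans H; rewrite subr_gt0.
    by rewrite pmulr_lgt0.
  have P0 : P B = 0%E.
    apply/eqP; rewrite eq_le measure_ge0 andbT.
    by apply: le_trans HY; apply: le_measure; rewrite ?inE.
  have : P ([set w | X w <= z2] `|` B) = 1%E.
    rewrite -(probability_setT P); congr (P _); apply/seteqP; split => // w _ /=.
    by case: (leP (X w) z2) => H; [left|right].
  rewrite measureU//; last first.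
    by apply/seteqP; split => // w [/= a b]; move: a; rewrite leNgt b.
  move=> H; have H' : (P [set w | (X w <= z2)%R] + P B = 1)%E := H.
  by move: H' F2; rewrite P0 adde0 /X => ->; rewrite ltxx.
have u1n : z1 < xlow by apply: lt_le_trans u2n.
have Xe' w : X w = xlow - (xlow - xi w) * expR (G + s * eta w).
  by rewrite Xe -mulNr opprB.
have [HY|HY] := ltP 0%E (P [set w | (0 < (fun x => xlow - x) (xi w))%R]).
  have := pos_prod _ (Num.max (xlow - z2) 0) (xlow - z1) G s mY' s0 _ _ HY.
  rewrite le_max lexx orbT => /(_ isT).
  rewrite gt_max subr_gt0 u1n andbT ltrD2l ltrN2 z12 => /(_ isT) H.
  apply: (lt_le_trans H); apply: le_measure; rewrite ?inE//.
    apply: measurableI.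
      by have := mset_lt (measurable_cst (Num.max (xlow - z2) 0)) (measurable_funM (measurableT_comp mY' mxi) (mEf G s)); exact.
    by have := mset_lt (measurable_funM (measurableT_comp mY' mxi) (mEf G s)) (measurable_cst (xlow - z1)); exact.
  move=> w [/= h1 h2]; rewrite /= Xe'.
  move: h1 h2; generalize ((xlow - xi w) * expR (G + s * eta w)) => p h1 h2.
  rewrite gt_max in h1; case/andP: h1 => h1 _.
  split; rewrite /=; lra.
exfalso.
have mY0 : measurable [set w | (0 < (fun x => xlow - x) (xi w))%R].
  by have := mset_lt (measurable_cst (0:R)) (measurableT_comp mY' mxi); exact.
have sub : [set w | X w <= z1] `<=` [set w | (0 < (fun x => xlow - x) (xi w))%R].
  move=> w; rewrite /= Xe => H.
  have : (xi w - xlow) * expR (G + s * eta w) < 0 by lra.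
  by rewrite pmulr_llt0// subr_lt0 subr_gt0.
have : (P [set w | (X w <= z1)%R] <= 0)%E.
  by apply: le_trans HY; apply: le_measure; rewrite ?inE.
by rewrite leNgt F1.
Qed.

Lemma atomX (xlow G s c C : R) : 0 < s ->
  (\int[P]_w inv_sq_ext (xi w - xlow) < C%:E)%E ->
  P [set w | Xf xi eta xlow G s w = c] = 0%E.
Proof.
move=> s0 HI; set X := Xf xi eta xlow G s.
have mX : measurable_fun setT X := mXf xlow G s.
apply/eqP; rewrite eq_le measure_ge0 andbT.
have mXc : measurable [set w | X w = c] by have := mset_eq mX (measurable_cst c); exact.
have [->|cx] := eqVneq c xlow.
  have mA : measurable [set w | xi w = xlow].
    by have := mset_eq mxi (measurable_cst xlow); exact.
  have mXc' : measurable [set w | X w = xlow] by have := mset_eq mX (measurable_cst xlow); exact.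
  rewrite -(xi_atom _ _ HI); apply: le_measure; rewrite ?inE//.
  move=> w; rewrite /X /Xf /= => H.
  have : (xi w - xlow) * expR (G + s * eta w) == 0 by apply/eqP; lra.
  by rewrite mulf_eq0 (gt_eqF (expR_gt0 _)) orbF subr_eq0 => /eqP.
pose k (x : R) := (ln `|c - xlow| - ln `|x - xlow| - G) / s.
have mk : measurable_fun setT k.
  have mY : measurable_fun setT (fun x : R => x - xlow).
    by have := measurable_funB (@measurable_id _ R setT) (measurable_cst xlow); exact.
  have := measurable_funM (measurable_funB (measurable_funB (measurable_cst (ln `|c - xlow|))
     (measurableT_comp (@measurable_ln R) (measurableT_comp (@normr_measurable R setT) mY)))
     (measurable_cst G)) (measurable_cst s^-1).
  exact.
have mA : measurable [set w | eta w = k (xi w)].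
  by have := mset_eq meta (measurableT_comp mk mxi); exact.
rewrite -(atomless _ mk); apply: le_measure; rewrite ?inE//.
move=> w; rewrite /X /Xf /= => H.
have HYE : (xi w - xlow) * expR (G + s * eta w) = c - xlow by lra.
have Y0 : xi w - xlow != 0.
  apply/negP => /eqP Y0; move: HYE; rewrite Y0 mul0r => /esym/eqP.
  by rewrite subr_eq0 (negbTE cx).
have HN : `|xi w - xlow| * expR (G + s * eta w) = `|c - xlow|.
  by rewrite -HYE normrM (gtr0_norm (expR_gt0 _)).
have Hl : ln `|c - xlow| = ln `|xi w - xlow| + (G + s * eta w).
  by rewrite -HN lnM ?posrE ?normr_gt0 ?expR_gt0// expRK.
rewrite /k Hl.
have -> : ln `|xi w - xlow| + (G + s * eta w) - ln `|xi w - xlow| - G = eta w * s by lra.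
by rewrite mulfK// gt_eqF.
Qed.

Lemma main_sec (xlow alpha0 G Lambda1 C : R) :
  0 < alpha0 -> alpha0 < 1 -> 0 < Lambda1 ->
  (\int[P]_w inv_sq_ext (xi w - xlow) < C%:E)%E ->
  exists! z, distr_fun P (Xf xi eta xlow G (Num.sqrt Lambda1)) z = alpha0%:E.
Proof.
move=> a0 a1 L0 HI.
set s := Num.sqrt Lambda1.
have s0 : 0 < s by rewrite sqrtr_gt0.
set X := Xf xi eta xlow G s.
have mX : measurable_fun setT X := mXf xlow G s.
pose F z := P [set w | (X w <= z)%R].
have mle z : measurable [set w | X w <= z] by have := mset_le mX (measurable_cst z); exact.
have Fmono z1 z2 : z1 <= z2 -> (F z1 <= F z2)%E.
  move=> z12; apply: le_measure; rewrite ?inE//.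
  by move=> w /= h; apply: le_trans h z12.
have Fle1 z : (F z <= 1)%E by apply: probability_le1.
have [a Fa] : exists a, (F a < alpha0%:E)%E.
  apply: contrapT => /forallNP H.
  have H' n : (alpha0%:E <= F (- n%:R)%R)%E by rewrite leNgt; apply/negP; exact: H.
  pose Fn (n : nat) := [set w | X w <= - n%:R].
  have mFn n : measurable (Fn n) by exact: mle.
  have niF : nonincreasing_seq Fn.
    move=> m p mp; apply/subsetPset => w /= h; apply: le_trans h _.
    by rewrite lerN2 ler_nat.
  have F0 : (P (Fn 0%N) < +oo)%E by rewrite (le_lt_trans (Fle1 _))// ltry.
  have cvF := nonincreasing_cvg_mu F0 mFn (bigcapT_measurable mFn) niF.
  have capE : \bigcap_n Fn n = set0.
    apply/seteqP; split => // w /= Hw.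
    have := Hw (Num.truncn `|X w|).+1 I; rewrite /Fn /=.
    have := truncnS_gt `|X w|; have := ler_norm (- X w); rewrite normrN.
    move=> h1 h2 h3; lra.
  rewrite capE measure0 in cvF.
  have := lime_ge (cvgP _ cvF) (nearW _ H').
  rewrite (cvg_lim _ cvF)// => H2.
  have : (alpha0%:E <= 0)%E by apply: H2; typeclasses eauto.
  by rewrite lee_fin leNgt a0.
have [b Fb] : exists b, (alpha0%:E < F b)%E.
  apply: contrapT => /forallNP H.
  have H' n : (F (n%:R : R) <= alpha0%:E)%E by rewrite leNgt; apply/negP; exact: H.
  pose Gn (n : nat) := [set w | X w <= n%:R].
  have mGn n : measurable (Gn n) by exact: mle.
  have ndG : nondecreasing_seq Gn.
    move=> m p mp; apply/subsetPset => w /= h; apply: le_trans h _.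
    by rewrite ler_nat.
  have cvG := @nondecreasing_cvg_mu _ _ _ P Gn mGn (bigcupT_measurable Gn mGn) ndG.
  have cupE : \bigcup_n Gn n = setT.
    apply/seteqP; split => // w _.
    exists (Num.truncn `|X w|).+1 => //; rewrite /Gn /=.
    have := truncnS_gt `|X w|; have := ler_norm (X w).
    move=> h1 h2; lra.
  rewrite cupE in cvG.
  have := lime_le (cvgP _ cvG) (nearW _ H').
  rewrite (cvg_lim _ cvG)// => H2.
  have : (P [set: T] <= alpha0%:E)%E by apply: H2; typeclasses eauto.
  by rewrite probability_setT lee_fin leNgt a1.
pose S := [set z : R | (F z < alpha0%:E)%E].
have hS : has_sup S.
  split; first by exists a.
  exists b => z Sz; rewrite leNgt; apply/negP => bz.
  have Fbz := Fmono _ _ (ltW bz).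
  by have := lt_trans Fb (le_lt_trans Fbz Sz); rewrite ltxx.
set zs := sup S.
have ipos (n : nat) : 0 < (n.+1%:R : R)^-1 by rewrite invr_gt0 ltr0n.
have Fr : (alpha0%:E <= F zs)%E.
  pose Hn (n : nat) := [set w | X w <= zs + (n.+1%:R)^-1].
  have mHn n : measurable (Hn n) by exact: mle.
  have niH : nonincreasing_seq Hn.
    move=> m p mp; apply/subsetPset => w /= h; apply: le_trans h _.
    by rewrite lerD2l lef_pV2 ?posrE ?ltr0n// ler_nat ltnS.
  have F0 : (P (Hn 0%N) < +oo)%E by rewrite (le_lt_trans (Fle1 _))// ltry.
  have cvH := nonincreasing_cvg_mu F0 mHn (bigcapT_measurable mHn) niH.
  have capE : \bigcap_n Hn n = [set w | X w <= zs].
    apply/seteqP; split => w /= Hw.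
      rewrite leNgt; apply/negP => zX.
      have [n hn] := @small_inv R (X w - zs) (ltac:(by rewrite subr_gt0)).
      have := Hw n I; rewrite /Hn /=.
      move=> h; have h' : (X w <= zs + (n.+1%:R)^-1 :> R)%R := h.
      have hn' : ((n.+1%:R)^-1 < X w - zs :> R)%R := hn.
      move: hn' h'; generalize ((n.+1%:R)^-1 : R) => i; lra.
    move=> n _; rewrite /Hn /=; apply: le_trans Hw _.
    by rewrite lerDl ltW.
  rewrite capE in cvH.
  have H' n : (alpha0%:E <= F (zs + (n.+1%:R)^-1)%R)%E.
    rewrite leNgt; apply/negP => Hlt.
    have := sup_upper_bound hS Hlt; rewrite -/zs.
    exact: aux_self (ipos n).
  have := lime_ge (cvgP _ cvH) (nearW _ H').
  rewrite (cvg_lim _ cvH)// => H2.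
  by apply: H2; typeclasses eauto.
have Fl : (P [set w | (X w < zs)%R] <= alpha0%:E)%E.
  pose Ln (n : nat) := [set w | X w <= zs - (n.+1%:R)^-1].
  have mLn n : measurable (Ln n) by exact: mle.
  have ndL : nondecreasing_seq Ln.
    move=> m p mp; apply/subsetPset => w /= h; apply: le_trans h _.
    by rewrite lerD2l lerN2 lef_pV2 ?posrE ?ltr0n// ler_nat ltnS.
  have cvL := @nondecreasing_cvg_mu _ _ _ P Ln mLn (bigcupT_measurable Ln mLn) ndL.
  have cupE : \bigcup_n Ln n = [set w | X w < zs].
    apply/seteqP; split => w /=.
      by case=> n _; rewrite /Ln /= => h; exact: aux_lt (ipos n) h.
    move=> Hw; have [n hn] := @small_inv R (zs - X w) (ltac:(by rewrite subr_gt0)).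
    by exists n => //; rewrite /Ln /=; exact: aux_le hn.
  rewrite cupE in cvL.
  have H' n : (F (zs - (n.+1%:R)^-1)%R <= alpha0%:E)%E.
    have [e Se he] := sup_adherent (ipos n) hS.
    by apply: le_trans (Fmono _ _ (ltW he)) (ltW Se).
  have := lime_le (cvgP _ cvL) (nearW _ H').
  rewrite (cvg_lim _ cvL)// => H2.
  by apply: H2; typeclasses eauto.
have Feq : F zs = P [set w | (X w < zs)%R].
  have mlt : measurable [set w | X w < zs] by have := mset_lt mX (measurable_cst zs); exact.
  have meq : measurable [set w | X w = zs] by have := mset_eq mX (measurable_cst zs); exact.
  have disj : [set w | X w < zs] `&` [set w | X w = zs] = set0.
    by apply/seteqP; split => // w [/= h1 h2]; move: h1; rewrite h2 ltxx.
  have HU := measureU P mlt meq disj.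
  have HU' : (P ([set w | (X w < zs)%R] `|` [set w | X w = zs]) =
     P [set w | (X w < zs)%R] + P [set w | X w = zs])%E := HU.
  rewrite (atomX xlow G s zs C s0 HI) adde0 in HU'.
  rewrite -HU' /F; congr (P _); apply/seteqP; split => w /=.
    by rewrite le_eqVlt => /orP[/eqP ->|h]; [right|left].
  by case=> [h|->//]; exact: ltW.
have FzsE : F zs = alpha0%:E by apply: le_anti; rewrite Fr andbT Feq.
exists zs; split => // z Fz.
have Fz' : F z = alpha0%:E := Fz.
have F1 : (0 < F z)%E by rewrite Fz' lte_fin.
have F2 : (F zs < 1)%E by rewrite FzsE lte_fin.
have F1' : (0 < F zs)%E by rewrite FzsE lte_fin.
have F2' : (F z < 1)%E by rewrite Fz' lte_fin.
case: (ltgtP z zs) => // h; exfalso.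
  by have := strict xlow G s z zs s0 h F1 F2; rewrite -/(F z) -/(F zs) Fz' FzsE ltxx.
by have := strict xlow G s zs z s0 h F1' F2'; rewrite -/(F z) -/(F zs) Fz' FzsE ltxx.
Qed.

End main.


Theorem lemma10 (d : measure_display) (T : measurableType d) (R : realType)
  (P : probability T R) (xi eta : {RV P >-> R})
  (xlow alpha0 delta Gamma1 Lambda1 : R) :
  xlow <= 0 -> 0 < alpha0 -> alpha0 < 1 -> 0 < delta -> 0 < Lambda1 ->
  (* law of xi is in P_2(R) *)
  (\int[P]_w ((xi w) ^+ 2)%:E < +oo)%E ->
  (* E |xi - xlow|^{-2} < delta^{-2} *)
  (\int[P]_w inv_sq_ext (xi w - xlow) < ((delta ^+ 2)^-1)%:E)%E ->
  (* eta ~ N(0,1) *)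
  (forall A : set R, measurable A -> distribution P eta A = normal_prob 0 1 A) ->
  indep_RV xi eta ->
  exists! z : R,
    distr_fun P (fun w => xlow + (xi w - xlow) *
                   expR (Gamma1 + Num.sqrt Lambda1 * eta w)) z = alpha0%:E.
Proof.
move=> _ a0 a1 _ L0 _ Hinv Heta Hind.
exact: (@main_sec d T R P xi eta Heta Hind xlow alpha0 Gamma1 Lambda1 _ a0 a1 L0 Hinv).
Qed.
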